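(* Let $R$ be a commutative local ring with maximal ideal $J$ and residue field $K=R/J$. Let $M$ be an $R$-module and $C$ an $R$-linear relation on $M$ such that $JM\subseteq (C^{-1})'+C'$ and such that $C^\sharp/C^\flat$ has finite dimension over $K$. Then there exists a free reduction $(X\mid\rho)$ of $(M,C)$ that meets in the radical.
   Context: An $R$-linear relation on $M$ is an $R$-submodule $C\subseteq M\oplus M$. For $m\in M$, $Cm=\{m'\in M:(m,m')\in C\}$; $C^{-1}=\{(y,x):(x,y)\in C\}$. Define submodules: $C''$ = set of $m\in M$ for which there is a sequence $(m_n)_{n\in\mathbb{N}}$ in $M$ with $m_0=m$ and $m_{n+1}\in Cm_n$ for all $n$; $C'$ = set of such $m$ for which such a sequence exists with additionally $m_n=0$ for $n\gg0$; $C^\sharp=C''\cap(C^{-1})''$; $C^\flat=C''\cap(C^{-1})'+(C^{-1})''\cap C'$. Then $C^\flat\subseteq C^\sharp$ and $C^\sharp/C^\flat$ is an $R$-module (annihilated by $J$ under the hypothesis, hence a $K$-vector space). A reduction of $(M,C)$ is a pair $(X\mid\rho)$ where $X$ is an $R[T,T^{-1}]$-module and $\rho\colon X\to M$ is $R$-linear with $C^\sharp=C^\flat+\mathrm{im}(\rho)$ and $\rho(Tx)\in C\rho(x)$ for all $x\in X$. It is free if $X$ is free as an $R$-module, and meets in the radical if $\{x\in X:\rho(x)\in C^\flat\}=\mathrm{rad}(X)$, the radical of $X$ as an $R$-module (intersection of maximal $R$-submodules). *)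

(* Defs.v *)
From HB Require Import structures.
From mathcomp Require Import all_boot all_order all_algebra.
Set Implicit Arguments. Unset Strict Implicit. Unset Printing Implicit Defensive.
Import GRing.Theory.
Local Open Scope ring_scope.

Definition is_ideal (R : comNzRingType) (I : R -> Prop) : Prop :=
  I 0 /\ (forall x y, I x -> I y -> I (x + y)) /\ (forall a x, I x -> I (a * x)).

Definition maximal_ideal (R : comNzRingType) (I : R -> Prop) : Prop :=
  is_ideal I /\ ~ I 1 /\
  forall I' : R -> Prop, is_ideal I' -> ~ I' 1 -> (forall x, I x -> I' x) ->
    forall x, I' x -> I x.

Definition local_ring_with_max (R : comNzRingType) (J : R -> Prop) : Prop :=
  maximal_ideal J /\
  forall I : R -> Prop, maximal_ideal I -> forall x, I x <-> J x.

Definition is_submod (R : comNzRingType) (M : lmodType R) (N : M -> Prop) : Prop :=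
  N 0 /\ forall (a : R) (x y : M), N x -> N y -> N (a *: x + y).

Definition linrel (R : comNzRingType) (M : lmodType R) (C : M * M -> Prop) : Prop :=
  C (0, 0) /\
  forall (a : R) (x y x' y' : M), C (x, y) -> C (x', y') ->
    C (a *: x + x', a *: y + y').

Section Rel.
Variables (R : comNzRingType) (M : lmodType R).

Definition rel_inv (C : M * M -> Prop) : M * M -> Prop := fun p => C (p.2, p.1).

Definition rel_dd (C : M * M -> Prop) : M -> Prop := fun m =>
  exists s : nat -> M, s 0%N = m /\ forall n, C (s n, s n.+1).

Definition rel_d (C : M * M -> Prop) : M -> Prop := fun m =>
  exists s : nat -> M, s 0%N = m /\ (forall n, C (s n, s n.+1)) /\
    exists N : nat, forall n, (N <= n)%N -> s n = 0.

Definition rel_sharp (C : M * M -> Prop) : M -> Prop := fun m =>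
  rel_dd C m /\ rel_dd (rel_inv C) m.

Definition rel_flat (C : M * M -> Prop) : M -> Prop := fun m =>
  exists a b : M, m = a + b /\
    (rel_dd C a /\ rel_d (rel_inv C) a) /\
    (rel_dd (rel_inv C) b /\ rel_d C b).

Definition ideal_times_mod (J : R -> Prop) : M -> Prop := fun x =>
  exists s : seq (R * M), (forall p, p \in s -> J p.1) /\
    x = \sum_(p <- s) p.1 *: p.2.

End Rel.

(* C^sharp / C^flat is finite dimensional: finitely many elements of C^sharp
   span C^sharp modulo C^flat (over R, equivalently over K = R/J, as the
   quotient is annihilated by J). *)
Definition sharp_flat_findim (R : comNzRingType) (M : lmodType R)
    (C : M * M -> Prop) : Prop :=
  exists v : seq M, (forall x, x \in v -> rel_sharp C x) /\
    forall m, rel_sharp C m ->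
      exists (c : M -> R) (f : M), rel_flat C f /\
        m = f + \sum_(x <- v) c x *: x.

Definition is_basis (R : comNzRingType) (X : lmodType R) (B : X -> Prop) : Prop :=
  (forall x : X, exists (s : seq X) (c : X -> R),
      (forall b, b \in s -> B b) /\ x = \sum_(b <- s) c b *: b) /\
  (forall (s : seq X) (c : X -> R), uniq s -> (forall b, b \in s -> B b) ->
      \sum_(b <- s) c b *: b = 0 -> forall b, b \in s -> c b = 0).

Definition free_mod (R : comNzRingType) (X : lmodType R) : Prop :=
  exists B : X -> Prop, is_basis B.

Definition maximal_submod (R : comNzRingType) (X : lmodType R) (N : X -> Prop) : Prop :=
  is_submod N /\ (exists y, ~ N y) /\
  forall N' : X -> Prop, is_submod N' -> (forall x, N x -> N' x) ->
    (forall x, N' x) \/ (forall x, N' x -> N x).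

Definition radical (R : comNzRingType) (X : lmodType R) : X -> Prop := fun x =>
  forall N : X -> Prop, maximal_submod N -> N x.

Definition Rlinear (R : comNzRingType) (X Y : lmodType R) (f : X -> Y) : Prop :=
  forall (a : R) (x y : X), f (a *: x + y) = a *: f x + f y.

(* An R[T,T^-1]-module is an R-module X together with an R-linear
   automorphism T of X. *)
Definition is_reduction (R : comNzRingType) (M : lmodType R) (C : M * M -> Prop)
    (X : lmodType R) (T : X -> X) (rho : X -> M) : Prop :=
  Rlinear T /\ bijective T /\ Rlinear rho /\
  (forall m, rel_sharp C m <-> exists f x, rel_flat C f /\ m = f + rho x) /\
  (forall x, C (rho x, rho (T x))).

Definition meets_in_radical (R : comNzRingType) (M : lmodType R) (C : M * M -> Prop)
    (X : lmodType R) (rho : X -> M) : Prop :=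
  forall x, rel_flat C (rho x) <-> radical x.

(* Main.v *)
Require Import Defs.
From mathcomp Require Import all_boot all_order all_algebra.
Set Implicit Arguments. Unset Strict Implicit. Unset Printing Implicit Defensive.
Import GRing.Theory.
Local Open Scope ring_scope.

Section LinRel.
Variables (R : comNzRingType) (V : lmodType R) (D : V * V -> Prop).
Hypothesis HD : linrel D.

Lemma lin0 : D (0, 0). Proof. by case: HD. Qed.
Lemma linD x y x' y' : D (x, y) -> D (x', y') -> D (x + x', y + y').
Proof. by move=> h h'; have := HD.2 1 _ _ _ _ h h'; rewrite !scale1r. Qed.
Lemma linZ a x y : D (x, y) -> D (a *: x, a *: y).
Proof. by move=> h; have := HD.2 a _ _ _ _ h lin0; rewrite !addr0. Qed.
Lemma linN x y : D (x, y) -> D (- x, - y).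
Proof. by move=> h; have := linZ (-1) h; rewrite !scaleN1r. Qed.
Lemma linB x y x' y' : D (x, y) -> D (x', y') -> D (x - x', y - y').
Proof. by move=> h h'; apply: linD => //; apply: linN. Qed.
Lemma lin_sum (I : Type) (r : seq I) (c : I -> R) (f g : I -> V) :
  (forall i, D (f i, g i)) -> D (\sum_(i <- r) c i *: f i, \sum_(i <- r) c i *: g i).
Proof.
move=> h; elim: r => [|i r IH]; first by rewrite !big_nil; exact: lin0.
by rewrite !big_cons; apply: HD.2.
Qed.

Lemma linrel_inv : linrel (rel_inv D).
Proof. by split; [exact: lin0 | move=> a x y x' y' h h'; exact: HD.2]. Qed.

Lemma dd0 : rel_dd D 0.
Proof. by exists (fun _ => 0); split => // n; exact: lin0. Qed.
Lemma dd_lin a x y : rel_dd D x -> rel_dd D y -> rel_dd D (a *: x + y).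
Proof.
move=> [s [s0 hs]] [t [t0 ht]]; exists (fun n => a *: s n + t n); split.
  by rewrite s0 t0.
by move=> n; apply: HD.2.
Qed.
Lemma d0 : rel_d D 0.
Proof. by exists (fun _ => 0); split => //; split => [n|]; [exact: lin0 | exists 0%N]. Qed.
Lemma d_lin a x y : rel_d D x -> rel_d D y -> rel_d D (a *: x + y).
Proof.
move=> [s [s0 [hs [N hN]]]] [t [t0 [ht [N' hN']]]]; exists (fun n => a *: s n + t n); split.
  by rewrite s0 t0.
split; first by move=> n; apply: HD.2.
exists (maxn N N') => n; rewrite geq_max => /andP[h1 h2].
by rewrite hN // hN' // scaler0 addr0.
Qed.
Lemma d_dd x : rel_d D x -> rel_dd D x.
Proof. by move=> [s [s0 [hs _]]]; exists s. Qed.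
Lemma dd_cons x y : D (x, y) -> rel_dd D y -> rel_dd D x.
Proof.
move=> hxy [s [s0 hs]]; exists (fun n => if n is k.+1 then s k else x); split => //.
by case=> [|n] /=; [rewrite s0 | exact: hs].
Qed.
Lemma d_cons x y : D (x, y) -> rel_d D y -> rel_d D x.
Proof.
move=> hxy [s [s0 [hs [N hN]]]]; exists (fun n => if n is k.+1 then s k else x); split => //.
split; first by case=> [|n] /=; [rewrite s0 | exact: hs].
by exists N.+1; case=> [|n] //= h; apply: hN.
Qed.
Lemma dd_next x : rel_dd D x -> exists y, D (x, y) /\ rel_dd D y.
Proof.
move=> [s [s0 hs]]; exists (s 1%N); split; first by rewrite -s0.
by exists (fun n => s n.+1).
Qed.
Lemma d_next x : rel_d D x -> exists y, D (x, y) /\ rel_d D y.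
Proof.
move=> [s [s0 [hs [N hN]]]]; exists (s 1%N); split; first by rewrite -s0.
exists (fun n => s n.+1); split => //; split => // ; exists N => n h; apply: hN; exact: leqW.
Qed.
Lemma ddB x y : rel_dd D x -> rel_dd D y -> rel_dd D (x - y).
Proof.
move=> h h'; rewrite -[x]scale1r; apply: dd_lin => //.
by rewrite -scaleN1r -[_ *: y]addr0; apply: dd_lin => //; exact: dd0.
Qed.
Lemma dB x y : rel_d D x -> rel_d D y -> rel_d D (x - y).
Proof.
move=> h h'; rewrite -[x]scale1r; apply: d_lin => //.
by rewrite -scaleN1r -[_ *: y]addr0; apply: d_lin => //; exact: d0.
Qed.
End LinRel.

Section SharpFlat.
Variables (R : comNzRingType) (M : lmodType R) (C : M * M -> Prop).
Hypothesis HC : linrel C.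
Let HCi : linrel (rel_inv C) := linrel_inv HC.

Definition Pset (x : M) := rel_dd C x /\ rel_d (rel_inv C) x.
Definition Qset (x : M) := rel_dd (rel_inv C) x /\ rel_d C x.

Lemma P0 : Pset 0. Proof. split; [exact: dd0 | exact: d0]. Qed.
Lemma Q0 : Qset 0. Proof. split; [exact: dd0 | exact: d0]. Qed.
Lemma P_lin a x y : Pset x -> Pset y -> Pset (a *: x + y).
Proof. by move=> [h1 h2] [h3 h4]; split; [exact: dd_lin|exact: d_lin]. Qed.
Lemma Q_lin a x y : Qset x -> Qset y -> Qset (a *: x + y).
Proof. by move=> [h1 h2] [h3 h4]; split; [exact: dd_lin|exact: d_lin]. Qed.

Lemma flatE x : rel_flat C x <-> exists a b, x = a + b /\ Pset a /\ Qset b.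
Proof. by []. Qed.

Lemma flat0 : rel_flat C 0.
Proof. by exists 0, 0; rewrite addr0; split => //; split; [exact: P0|exact: Q0]. Qed.
Lemma flat_lin a x y : rel_flat C x -> rel_flat C y -> rel_flat C (a *: x + y).
Proof.
move=> [p [q [-> [hp hq]]]] [p' [q' [-> [hp' hq']]]].
exists (a *: p + p'), (a *: q + q'); split; last by split; [exact: P_lin|exact: Q_lin].
by rewrite scalerDr addrACA.
Qed.
Lemma sharp0 : rel_sharp C 0. Proof. by split; exact: dd0. Qed.
Lemma sharp_lin a x y : rel_sharp C x -> rel_sharp C y -> rel_sharp C (a *: x + y).
Proof. by move=> [h1 h2] [h3 h4]; split; exact: dd_lin. Qed.
Lemma P_sharp x : Pset x -> rel_sharp C x.
Proof. by move=> [h1 h2]; split => //; exact: d_dd. Qed.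
Lemma Q_sharp x : Qset x -> rel_sharp C x.
Proof. by move=> [h1 h2]; split => //; exact: d_dd. Qed.
Lemma flat_sharp x : rel_flat C x -> rel_sharp C x.
Proof.
move=> [p [q [-> [hp hq]]]]; rewrite -[p]scale1r.
by apply: sharp_lin; [exact: P_sharp|exact: Q_sharp].
Qed.

Lemma P_flat x : Pset x -> rel_flat C x.
Proof. by move=> h; exists x, 0; rewrite addr0; split => //; split => //; exact: Q0. Qed.
Lemma Q_flat x : Qset x -> rel_flat C x.
Proof. by move=> h; exists 0, x; rewrite add0r; split => //; split => //; exact: P0. Qed.
Lemma flatD x y : rel_flat C x -> rel_flat C y -> rel_flat C (x + y).
Proof. by move=> h h'; rewrite -[x]scale1r; exact: flat_lin. Qed.
Lemma flatZ a x : rel_flat C x -> rel_flat C (a *: x).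
Proof. by move=> h; rewrite -[_ *: _]addr0; apply: flat_lin => //; exact: flat0. Qed.
Lemma flatN x : rel_flat C x -> rel_flat C (- x).
Proof. by move=> h; rewrite -scaleN1r; exact: flatZ. Qed.
Lemma flatB x y : rel_flat C x -> rel_flat C y -> rel_flat C (x - y).
Proof. by move=> h h'; apply: flatD => //; exact: flatN. Qed.
Lemma flat_sum (I : Type) (r : seq I) (F : I -> M) :
  (forall i, rel_flat C (F i)) -> rel_flat C (\sum_(i <- r) F i).
Proof.
move=> h; elim: r => [|i r IH]; first by rewrite big_nil; exact: flat0.
by rewrite big_cons; exact: flatD.
Qed.
Lemma sharpD x y : rel_sharp C x -> rel_sharp C y -> rel_sharp C (x + y).
Proof. by move=> h h'; rewrite -[x]scale1r; exact: sharp_lin. Qed.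
Lemma sharpZ a x : rel_sharp C x -> rel_sharp C (a *: x).
Proof. by move=> h; rewrite -[_ *: _]addr0; apply: sharp_lin => //; exact: sharp0. Qed.
Lemma sharpN x : rel_sharp C x -> rel_sharp C (- x).
Proof. by move=> h; rewrite -scaleN1r; exact: sharpZ. Qed.
Lemma sharpB x y : rel_sharp C x -> rel_sharp C y -> rel_sharp C (x - y).
Proof. by move=> h h'; apply: sharpD => //; exact: sharpN. Qed.
Lemma sharp_sum (I : Type) (r : seq I) (F : I -> M) :
  (forall i, rel_sharp C (F i)) -> rel_sharp C (\sum_(i <- r) F i).
Proof.
move=> h; elim: r => [|i r IH]; first by rewrite big_nil; exact: sharp0.
by rewrite big_cons; exact: sharpD.
Qed.

Lemma sharp_next x : rel_sharp C x -> exists y, C (x, y) /\ rel_sharp C y.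
Proof.
move=> [h1 h2]; have [y [hxy hy]] := dd_next h1; exists y; split => //; split => //.
exact: (dd_cons (D := rel_inv C) (x := y) (y := x)).
Qed.
Lemma sharp_prev x : rel_sharp C x -> exists y, C (y, x) /\ rel_sharp C y.
Proof.
move=> [h1 h2]; have [y [hxy hy]] := dd_next h2; exists y; split => //; split => //.
exact: (dd_cons (x := y) (y := x)).
Qed.

Lemma flat_back x y : C (x, y) -> rel_flat C y -> rel_sharp C x -> rel_flat C x.
Proof.
move=> hxy [a [b [Ey [[ha1 ha2] [hb1 hb2]]]]] [hx1 hx2]; subst y.
have [b1 [hb1b hb1']] := dd_next hb1.
have hb1Q : Qset b1.
  split => //; exact: (d_cons (x := b1) (y := b)).
have [a1 [ha1a ha1']] := d_next ha2.
have ha1P : Pset a1.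
  split => //; exact: (dd_cons (x := a1) (y := a)).
have hz : C (x - b1 - a1, 0).
  have := linB HC (linB HC hxy hb1b) ha1a.
  by rewrite addrC addrK subrr.
have hzQ : Qset (x - b1 - a1).
  split; first by apply: ddB => //; [apply: ddB|apply: d_dd].
  by apply: (d_cons hz); exact: d0.
exists a1, (b1 + (x - b1 - a1)); split.
  by rewrite addrCA [a1 + _]addrC subrK addrC subrK.
by split => //; have := Q_lin 1 hb1Q hzQ; rewrite scale1r.
Qed.
End SharpFlat.

From Stdlib Require Import Classical.
From mathcomp Require classical_sets.

Section LocalRing.
Variables (R : comNzRingType) (J : R -> Prop).
Hypothesis HJ : local_ring_with_max J.

Lemma J0 : J 0. Proof. by have [[h _] _] := HJ.1. Qed.
Lemma JD x y : J x -> J y -> J (x + y). Proof. by have [[_ [h _]] _] := HJ.1; exact: h. Qed.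
Lemma JM a x : J x -> J (a * x). Proof. by have [[_ [_ h]] _] := HJ.1; exact: h. Qed.
Lemma JMr a x : J x -> J (x * a). Proof. by rewrite mulrC; exact: JM. Qed.
Lemma J1 : ~ J 1. Proof. by have [_ [h _]] := HJ.1. Qed.
Lemma JN x : J x -> J (- x). Proof. by move=> h; rewrite -mulN1r; exact: JM. Qed.
Lemma JB x y : J x -> J y -> J (x - y). Proof. by move=> h h'; apply: JD => //; exact: JN. Qed.
Lemma J_sum (I : Type) (r : seq I) (F : I -> R) : (forall i, J (F i)) -> J (\sum_(i <- r) F i).
Proof.
move=> h; elim: r => [|i r IH]; first by rewrite big_nil; exact: J0.
by rewrite big_cons; exact: JD.
Qed.

Lemma notJ_comb r : ~ J r -> exists j s, J j /\ 1 = j + s * r.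
Proof.
move=> hr; pose I' := fun x => exists j s, J j /\ x = j + s * r.
apply: NNPP => hn; apply: hr.
have hI : is_ideal I'.
  split; first by exists 0, 0; rewrite mul0r addr0; split => //; exact: J0.
  split.
    move=> x y [j [s [hj ->]]] [j' [s' [hj' ->]]]; exists (j + j'), (s + s'); split; first exact: JD.
    by rewrite mulrDl addrACA.
  move=> a x [j [s [hj ->]]]; exists (a * j), (a * s); split; first exact: JM.
  by rewrite mulrDr mulrA.
have sub : forall x, J x -> I' x by move=> x hx; exists x, 0; rewrite mul0r addr0.
have [_ [_ hmax]] := HJ.1.
apply: (hmax I' hI hn sub); exists 0, 1; rewrite mul1r add0r; split => //; exact: J0.
Qed.

Section Z.
Import classical_sets.
Lemma unit_notJ r : ~ J r -> exists s, s * r = 1.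
Proof.
move=> hr; apply: NNPP => hn.
pose P := fun A : R -> Prop => (forall t, ~ A t) \/ (is_ideal A /\ ~ A 1 /\ A r).
have [A [PA Amax]] : exists A, P A /\ forall B, proper A B -> ~ P B.
  apply: Zorn_bigcup => F FP Ftot.
  case: (classic (exists X t, F X /\ X t)) => [[X0 [t0 [FX0 X0t0]]]|hne]; last first.
    by left => t [X FX Xt]; apply: hne; exists X, t.
  have ideal_of : forall X t, F X -> X t -> is_ideal X /\ ~ X 1 /\ X r.
    move=> X t FX Xt; case: (FP X FX) => // h; by case: (h t).
  right; split; last split.
  - split; first by exists X0 => //; have [[]] := ideal_of X0 t0 FX0 X0t0.
    split.
      move=> x y [X FX Xx] [Y FY Yy].
      have [hX _] := ideal_of X x FX Xx; have [hY _] := ideal_of Y y FY Yy.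
      case: (Ftot X Y FX FY) => hs.
        by exists Y => //; apply: hY.2.1 => //; exact: hs.
      by exists X => //; apply: hX.2.1 => //; exact: hs.
    move=> a x [X FX Xx]; exists X => //.
    have [hX _] := ideal_of X x FX Xx; exact: hX.2.2.
  - by move=> [X FX X1]; have [_ [h _]] := ideal_of X 1 FX X1.
  - by exists X0 => //; have [_ [_ h]] := ideal_of X0 t0 FX0 X0t0.
case: PA => [Aempty|[Aid [A1 Ar]]].
  apply: (Amax (fun x => exists s, x = s * r)).
    split; first by move=> t /Aempty.
    by move=> h; case: (Aempty r); apply: h; exists 1; rewrite mul1r.
  right; split; last split.
  - split; first by exists 0; rewrite mul0r.
    split; first by move=> x y [s ->] [s' ->]; exists (s + s'); rewrite mulrDl.
    by move=> a x [s ->]; exists (a * s); rewrite mulrA.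
  - by move=> [s hs]; apply: hn; exists s; rewrite -hs.
  - by exists 1; rewrite mul1r.
have Amaxi : maximal_ideal A.
  split => //; split => // I' hI' hI'1 AI' x hx.
  apply: NNPP => hAx; apply: (Amax I').
    by split => //; move=> h; apply: hAx; apply: h.
  by right; split => //; split => //; apply: AI'.
by apply: hr; apply/(HJ.2 A Amaxi r).
Qed.
End Z.

End LocalRing.

From mathcomp Require Import fingroup perm.

Section Det.
Variables (R : comNzRingType) (J : R -> Prop).
Hypothesis HJ : local_ring_with_max J.

Lemma det_nearI n (A : 'M[R]_n) :
  (forall i j, J (A i j - (i == j)%:R)) -> J (\det A - 1).
Proof.
move=> hA; rewrite /determinant (bigD1 1%g) //= odd_perm1 expr0 mul1r.
rewrite addrAC; apply: JD => //.
  apply: (big_ind (fun x => J (x - 1))); first by rewrite subrr; exact: J0.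
    move=> x y hx hy; have -> : x * y - 1 = x * (y - 1) + (x - 1).
      by rewrite mulrBr mulr1 addrA subrK.
    by apply: JD => //; exact: JM.
  by move=> i _; rewrite perm1; have := hA i i; rewrite eqxx.
apply: (big_ind J); [exact: J0 | move=> x y; exact: JD | ].
move=> s hs; apply: (JM HJ).
have [i hi] : exists i, s i != i.
  apply: NNPP => hn; move/eqP: hs; apply; apply/permP => i; rewrite perm1.
  by apply/eqP; apply: NNPP => h; apply: hn; exists i; apply/negP.
rewrite (bigD1 i) //=; apply: (JMr HJ).
by have := hA i (s i); rewrite eq_sym (negbTE hi) subr0.
Qed.

Lemma mx_inv_nearI n (A B : 'M[R]_n) :
  (forall i j, J ((A *m B) i j - (i == j)%:R)) ->
  exists Ai : 'M[R]_n, A *m Ai = 1%:M /\ Ai *m A = 1%:M.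
Proof.
move=> h; have hd := det_nearI h; rewrite det_mulmx in hd.
have [s hs] : exists s, s * (\det A * \det B) = 1.
  apply: (unit_notJ HJ) => hJ; apply: (J1 HJ).
  by have := JB HJ hJ hd; rewrite opprB addrC subrK.
exists ((s * \det B) *: \adj A); split.
  by rewrite -scalemxAr mul_mx_adj scale_scalar_mx -hs mulrAC mulrA.
by rewrite -scalemxAl mul_adj_mx scale_scalar_mx -hs mulrAC mulrA.
Qed.
End Det.

From Stdlib Require Import IndefiniteDescription.

Lemma choice_fun (A B : Type) (P : A -> B -> Prop) :
  (forall a, exists b, P a b) -> exists f : A -> B, forall a, P a (f a).
Proof.
move=> h; exists (fun a => proj1_sig (constructive_indefinite_description _ (h a))).
by move=> a; exact: proj2_sig (constructive_indefinite_description _ (h a)).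
Qed.

Section Tele.
Variables (R : comNzRingType) (V : lmodType R) (D : V * V -> Prop).
Hypothesis HD : linrel D.
Variables (phi : V -> V) (W : V -> Prop).
Hypothesis phiD : forall x y, phi (x + y) = phi x + phi y.
Hypothesis phiC : forall x y, D (x, y) -> D (phi x, phi y).
Hypothesis W0 : W 0.
Hypothesis WD : forall x y, W x -> W y -> W (x + y).
Hypothesis phiW : forall x, W x -> W (phi x).

Lemma phi0 : phi 0 = 0.
Proof. by have := phiD 0 0; rewrite addr0 => h; apply: (addrI (phi 0)); rewrite addr0 -h. Qed.

Lemma tele N : forall S : nat -> V, (forall m, D (S m.+1, S m)) ->
  (forall m, (N <= m)%N -> S m = 0) -> (forall m, W (S m)) ->
  exists Y, D (Y, phi Y + S 0%N) /\ W Y.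
Proof.
elim: N => [|N IH] S hS hz hW.
  by exists 0; rewrite phi0 hz // addr0; split => //; exact: lin0.
have [Y' [hY' wY']] := IH (fun m => S m.+1) (fun m => hS m.+1) (fun m h => hz m.+1 h) (fun m => hW m.+1).
exists (S 1%N + phi Y'); split; last by apply: WD => //; exact: phiW.
have := linD HD (hS 0%N) (phiC hY').
by rewrite phiD phiD => h; rewrite (addrC (phi (S 1%N))) [X in D (_, X)]addrC.
Qed.
End Tele.

Lemma ffB (I : finType) (V : zmodType) (x y : {ffun I -> V}) i : (x - y) i = x i - y i.
Proof. by rewrite !ffunE. Qed.
Lemma ffD (I : finType) (V : zmodType) (x y : {ffun I -> V}) i : (x + y) i = x i + y i.
Proof. by rewrite !ffunE. Qed.
Lemma ff0 (I : finType) (V : zmodType) i : (0 : {ffun I -> V}) i = 0.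
Proof. by rewrite !ffunE. Qed.

Section Act.
Variables (R : comNzRingType) (M : lmodType R) (n : nat).
Definition act (A : 'M[R]_n) (x : {ffun 'I_n -> M}) : {ffun 'I_n -> M} :=
  [ffun i => \sum_j A i j *: x j].

Lemma actD A x y : act A (x + y) = act A x + act A y.
Proof.
by apply/ffunP => i; rewrite !ffunE -big_split /=; apply: eq_bigr => j _; rewrite ffunE scalerDr.
Qed.
Lemma actB A x y : act A (x - y) = act A x - act A y.
Proof.
apply/ffunP => i; rewrite !ffunE -sumrB /=; apply: eq_bigr => j _.
by rewrite !ffunE scalerBr.
Qed.
Lemma act0 A : act A 0 = 0.
Proof. by apply/ffunP => i; rewrite !ffunE big1 // => j _; rewrite ffunE scaler0. Qed.
Lemma act_mul A B x : act (A *m B) x = act A (act B x).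
Proof.
apply/ffunP => i; rewrite !ffunE.
under eq_bigr do rewrite mxE scaler_suml.
rewrite exchange_big /=; apply: eq_bigr => k _.
by rewrite ffunE scaler_sumr; apply: eq_bigr => j _; rewrite scalerA.
Qed.
Lemma actMB A B x : act (A - B) x = act A x - act B x.
Proof.
apply/ffunP => i; rewrite !ffunE -sumrB; apply: eq_bigr => j _.
by rewrite !mxE scalerBl.
Qed.
Lemma act1 x : act 1%:M x = x.
Proof.
apply/ffunP => i; rewrite ffunE (bigD1 i) //= big1 ?addr0.
  by rewrite mxE eqxx scale1r.
by move=> j hj; rewrite mxE eq_sym (negbTE hj) scale0r.
Qed.

Definition reln (C : M * M -> Prop) (p : {ffun 'I_n -> M} * {ffun 'I_n -> M}) :=
  forall i, C (p.1 i, p.2 i).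

Lemma linrel_n C : linrel C -> linrel (reln C).
Proof.
move=> HC; split; first by move=> i; rewrite !ffunE; exact: lin0.
by move=> a x y x' y' h h' i; rewrite /= !ffunE; apply: HC.2; [exact: h|exact: h'].
Qed.
Lemma act_rel C A x y : linrel C -> reln C (x, y) -> reln C (act A x, act A y).
Proof. by move=> HC h i; rewrite /= !ffunE; apply: lin_sum => // j; exact: h. Qed.

Lemma sub_sum (S : M -> Prop) (I : Type) (r : seq I) (c : I -> R) (F : I -> M) :
  S 0 -> (forall a x y, S x -> S y -> S (a *: x + y)) -> (forall i, S (F i)) ->
  S (\sum_(i <- r) c i *: F i).
Proof.
move=> h0 hl hF; elim: r => [|i r IH]; first by rewrite big_nil.
by rewrite big_cons; exact: hl.
Qed.
Lemma act_sub (S : M -> Prop) A (x : {ffun 'I_n -> M}) :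
  S 0 -> (forall a y z, S y -> S z -> S (a *: y + z)) -> (forall i, S (x i)) ->
  forall i, S (act A x i).
Proof. by move=> h0 hl hx i; rewrite ffunE; exact: sub_sum. Qed.
End Act.

Section Radical.
Variables (R : comNzRingType) (J : R -> Prop).
Hypothesis HJ : local_ring_with_max J.

Lemma submodD (X : lmodType R) (N : X -> Prop) x y : is_submod N -> N x -> N y -> N (x + y).
Proof. by move=> [h0 h] hx hy; rewrite -[x]scale1r; exact: h. Qed.
Lemma submodZ (X : lmodType R) (N : X -> Prop) a x : is_submod N -> N x -> N (a *: x).
Proof. by move=> [h0 h] hx; rewrite -[_ *: _]addr0; exact: h. Qed.

Lemma Jmax (X : lmodType R) (N : X -> Prop) j y :
  maximal_submod N -> J j -> N (j *: y).
Proof.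
move=> [hN [_ hmax]] hj; case: (classic (N y)) => hy; first exact: submodZ.
pose m := fun r => N (r *: y).
have mid : is_ideal m.
  split; first by rewrite /m scale0r; exact: hN.1.
  split; first by move=> a b ha hb; rewrite /m scalerDl; exact: submodD.
  by move=> a b hb; rewrite /m -scalerA; exact: submodZ.
have mmax : maximal_ideal m.
  split => //; split; first by rewrite /m scale1r.
  move=> I' hI' hI'1 sub r hr; apply: NNPP => hnr.
  pose N' := fun z => exists n t, N n /\ z = n + t *: (r *: y).
  have hN' : is_submod N'.
    split; first by exists 0, 0; rewrite scale0r addr0; split => //; exact: hN.1.
    move=> a x z [n1 [t1 [h1 ->]]] [n2 [t2 [h2 ->]]].
    exists (a *: n1 + n2), (a * t1 + t2); split; first exact: hN.2.
    by rewrite scalerDr scalerA addrACA scalerDl scalerA.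
  have sub' : forall x, N x -> N' x by move=> x hx; exists x, 0; rewrite scale0r addr0.
  case: (hmax N' hN' sub') => [hall|hsub].
    have [n1 [t1 [hn1 e]]] := hall y.
    apply: hI'1; have -> : (1 : R) = (1 - t1 * r) + t1 * r by rewrite subrK.
    have [_ [hadd hmul]] := hI'; apply: hadd; last by apply: hmul.
    apply: sub; rewrite /m scalerBl scale1r -scalerA {1}e addrK //.
  by apply: hnr; apply: hsub; exists 0, 1; rewrite scale1r add0r; split => //; exact: hN.1.
by have := (HJ.2 m mmax j).2 hj.
Qed.

Lemma rad_rV n (x : 'rV[R]_n) : radical x <-> forall i, J (x 0 i).
Proof.
split=> [hx k|hx N hN].
  apply: (hx (fun y : 'rV[R]_n => J (y 0 k))).
  split.
    split; first by rewrite mxE; exact: J0.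
    by move=> a y z hy hz; rewrite !mxE; apply: JD => //; exact: JM.
  split; first by exists (delta_mx 0 k); rewrite mxE !eqxx; exact: J1.
  move=> N' hN' sub; case: (classic (exists z, N' z /\ ~ J (z 0 k))) => [[z [hz hzJ]]|hno]; last first.
    by right => z hz; apply: NNPP => h; apply: hno; exists z.
  left => y.
  have [j [s [hj e1]]] := notJ_comb HJ hzJ.
  have hek : N' (delta_mx 0 k).
    have -> : delta_mx 0 k = s *: z - (s *: z - (1 - j) *: delta_mx 0 k) + j *: delta_mx 0 k.
      by rewrite opprB addrCA subrr addr0 scalerBl scale1r subrK.
    have e2 : 1 - j = s * z 0 k by rewrite e1 addrAC subrr add0r.
    apply: submodD => //; last first.
      by apply: sub; rewrite !mxE !eqxx /= mulr1.
    apply: submodD => //; first exact: submodZ.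
    by apply: sub; rewrite !mxE !eqxx /= mulr1 e2 subrr oppr0; exact: J0.
  rewrite (row_sum_delta y) (bigD1 k) //=; apply: submodD => //; first exact: submodZ.
  apply: (big_ind N'); [exact: hN'.1 | by move=> u v hu hv; exact: submodD | ].
  move=> i hik; apply: sub; rewrite !mxE eqxx /= eq_sym (negbTE hik) mulr0; exact: J0.
rewrite (row_sum_delta x); apply: (big_ind N); [exact: hN.1.1 | by move=> u v hu hv; exact: submodD hN.1 hu hv | ].
by move=> i _; apply: Jmax.
Qed.
End Radical.

Section Free.
Variables (R : comNzRingType) (n : nat).

Lemma free_rV : free_mod ('rV[R]_n).
Proof.
exists (fun b => exists i, b = 'e_i); split.
  move=> x; exists (map (fun i => 'e_i) (index_enum 'I_n)).
  exists (fun b : 'rV[R]_n => \sum_j b 0 j * x 0 j); split.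
    by move=> b /mapP [i _ ->]; exists i.
  rewrite big_map {1}(row_sum_delta x); apply: eq_bigr => i _; congr (_ *: _).
  rewrite (bigD1 i) //= big1 ?addr0; first by rewrite mxE !eqxx mul1r.
  by move=> j hj; rewrite mxE (negbTE hj) andbF mul0r.
move=> s c us hs h0 b bs.
have [k ek] := hs b bs.
have := congr1 (fun m : 'rV[R]_n => m 0 k) h0; rewrite summxE (bigD1_seq b) //= mxE.
rewrite big_seq_cond big1 ?addr0; first by rewrite ek !mxE !eqxx mulr1.
move=> b' /andP [b's hb']; have [i ei] := hs b' b's; rewrite !mxE ei mxE eqxx /=.
case: (eqVneq i k) => [eik|nik]; last by rewrite mulr0.
by move: hb'; rewrite ei ek eik eqxx.
Qed.
End Free.
Lemma rearr (R : comNzRingType) (M : lmodType R) (f U S1 S2 : M) (dk j s ck : R) : 1 = j + s * ck ->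
 f + (dk *: U + S2) = f + (dk * j) *: U + (dk * s) *: (ck *: U + S1) + (S2 - (dk * s) *: S1).
Proof.
move=> e; have h : (dk * j) *: U + (dk * s * ck) *: U = dk *: U.
  by rewrite -scalerDl -mulrA -mulrDr -e mulr1.
rewrite scalerDr scalerA -h !addrA (addrAC _ ((dk * s) *: S1)) addrK //.
Qed.
Lemma rearr2 (V : zmodType) (p q a b c : V) :
  (p + q + a) - (b + p) + (c - q) = a - b + c.
Proof.
rewrite opprD !addrA (addrAC _ (- b)) (addrAC (p + q) a (-p)) (addrAC p q) subrr add0r.
by rewrite (addrAC _ c (-q)) (addrAC _ (-b) (-q)) (addrAC q a) subrr add0r.
Qed.

Lemma min_ex (P : nat -> Prop) : (exists k, P k) -> exists k, P k /\ forall k', (k' < k)%N -> ~ P k'.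
Proof.
move=> [k hk]; elim: k {-2}k (leqnn k) hk => [|K IH] k hkK hk.
  exists k; split => // k'; move: hkK; rewrite leqn0 => /eqP ->; by [].
case: (classic (exists k', (k' < k)%N /\ P k')) => [[k' [hk' hPk']]|hno].
  by apply: (IH k') => //; rewrite -ltnS; exact: leq_trans hk' hkK.
by exists k; split => // k' hk' hP; apply: hno; exists k'.
Qed.

Lemma d_seqE (R : comNzRingType) (V : lmodType R) (D : V * V -> Prop) x :
  rel_d D x -> exists sN : (nat -> V) * nat, sN.1 0%N = x /\ (forall m, D (sN.1 m, sN.1 m.+1)) /\
    forall m, (sN.2 <= m)%N -> sN.1 m = 0.
Proof. by move=> [s [s0 [hs [N hN]]]]; exists (s, N). Qed.

Lemma d_tail (R : comNzRingType) (V : lmodType R) (D : V * V -> Prop) (s : nat -> V) N :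
  (forall m, D (s m, s m.+1)) -> (forall m, (N <= m)%N -> s m = 0) -> forall m, rel_d D (s m).
Proof.
move=> hs hN m; exists (fun k => s (m + k)%N); split; first by rewrite addn0.
split; first by move=> k; rewrite addnS; exact: hs.
by exists N => k hk; apply: hN; exact: leq_trans hk (leq_addl _ _).
Qed.

Section Main.
Variables (R : comNzRingType) (J : R -> Prop) (M : lmodType R) (C : M * M -> Prop).
Hypothesis HJ : local_ring_with_max J.
Hypothesis HC : linrel C.
Hypothesis H3 : forall x, ideal_times_mod J x ->
     exists a b, x = (a + b)%R /\ rel_d (rel_inv C) a /\ rel_d C b.

Lemma JS j x : J j -> rel_sharp C x -> rel_flat C (j *: x).
Proof.
move=> hj [hx1 hx2].
have [a [b [e [ha hb]]]] : exists a b, j *: x = (a + b)%R /\ rel_d (rel_inv C) a /\ rel_d C b.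
  apply: H3; exists [:: (j, x)]; split; last by rewrite big_seq1.
  by move=> p; rewrite mem_seq1 => /eqP ->.
exists a, b; split => //; split; split => //.
- have -> : a = j *: x - b by rewrite e addrK.
  apply: ddB => //; last exact: d_dd.
  by rewrite -[_ *: _]addr0; apply: dd_lin => //; exact: dd0.
- have -> : b = j *: x - a by rewrite e [a + b]addrC addrK.
  have HCi := linrel_inv HC.
  apply: ddB => //; last exact: d_dd.
  by rewrite -[_ *: _]addr0; apply: dd_lin => //; exact: dd0.
Qed.

Definition spans k (u : 'I_k -> M) := (forall i, rel_sharp C (u i)) /\
  forall m, rel_sharp C m -> exists (c : 'I_k -> R) f, rel_flat C f /\ m = f + \sum_i c i *: u i.

Lemma indep_min n (u : 'I_n -> M) : spans u -> (forall k (u' : 'I_k -> M), (k < n)%N -> ~ spans u') ->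
  forall c : 'I_n -> R, rel_flat C (\sum_i c i *: u i) -> forall k, J (c k).
Proof.
move=> [hus hsp] hmin c hc k; apply: NNPP => hck.
case: n k u hus hsp hmin c hc hck => [|n'] k; first by case: k.
move=> u hus hsp hmin c hc hck.
have [j [s [hj e1]]] := notJ_comb HJ hck.
apply: (hmin n' (fun i => u (lift k i))) => //; split; first by move=> i; exact: hus.
move=> m /hsp [d [f [hf ->]]].
exists (fun i => d (lift k i) - d k * s * c (lift k i)).
exists (f + (d k * j) *: u k + (d k * s) *: (\sum_i c i *: u i)).
split.
  apply: flatD => //; last exact: (flatZ HC).
  apply: flatD => //; apply: JS => //; exact: (JM HJ).
rewrite (bigD1_ord k) //= [\sum_(i < n'.+1) _](bigD1_ord k) //=.
under [X in _ = _ + X]eq_bigr do rewrite scalerBl -scalerA.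
by rewrite sumrB -scaler_sumr; apply: rearr.
Qed.
End Main.

Section Key.
Variables (R : comNzRingType) (J : R -> Prop) (M : lmodType R) (C : M * M -> Prop).
Hypothesis HJ : local_ring_with_max J.
Hypothesis HC : linrel C.
Hypothesis H3 : forall x, ideal_times_mod J x ->
     exists a b, x = (a + b)%R /\ rel_d (rel_inv C) a /\ rel_d C b.

Lemma key n (u : 'I_n -> M) : spans C u -> (forall k (u' : 'I_k -> M), (k < n)%N -> ~ spans C u') ->
  exists (A Ai : 'M[R]_n) (u' : {ffun 'I_n -> M}), A *m Ai = 1%:M /\ Ai *m A = 1%:M /\
    reln C (u', act A u') /\ forall i, rel_flat C (u' i - u i).
Proof.
move=> hsp hmin; have [hus hspan] := hsp; have indep := indep_min HJ HC H3 hsp hmin.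
have HCn := linrel_n n HC.
have [w hw] := choice_fun (fun i => sharp_next (hus i)).
have [af haf] : exists af : 'I_n -> ('I_n -> R) * M, forall i,
    rel_flat C (af i).2 /\ w i = (af i).2 + \sum_j (af i).1 j *: u j.
  have h : forall i, exists cf : ('I_n -> R) * M, rel_flat C cf.2 /\ w i = cf.2 + \sum_j cf.1 j *: u j.
    by move=> i; have [c [f [hf e]]] := hspan _ (hw i).2; exists (c, f).
  exact: choice_fun h.
have [z hz] := choice_fun (fun i => sharp_prev (hus i)).
have [bg hbg] : exists bg : 'I_n -> ('I_n -> R) * M, forall i,
    rel_flat C (bg i).2 /\ z i = (bg i).2 + \sum_j (bg i).1 j *: u j.
  have h : forall i, exists cf : ('I_n -> R) * M, rel_flat C cf.2 /\ z i = cf.2 + \sum_j cf.1 j *: u j.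
    by move=> i; have [c [f [hf e]]] := hspan _ (hz i).2; exists (c, f).
  exact: choice_fun h.
pose A := \matrix_(i, j) (af i).1 j; pose B := \matrix_(i, j) (bg i).1 j.
pose uv := [ffun i => u i]; pose wv := [ffun i => w i]; pose zv := [ffun i => z i].
pose fv := [ffun i => (af i).2]; pose gv := [ffun i => (bg i).2].
have hwv : wv = fv + act A uv.
  apply/ffunP => i; rewrite !ffunE (haf i).2; congr (_ + _); apply: eq_bigr => j _.
  by rewrite mxE ffunE.
have hzv : zv = gv + act B uv.
  apply/ffunP => i; rewrite !ffunE (hbg i).2; congr (_ + _); apply: eq_bigr => j _.
  by rewrite mxE ffunE.
have huw : reln C (uv, wv) by move=> i; rewrite /= !ffunE; exact: (hw i).1.
have hzu : reln C (zv, uv) by move=> i; rewrite /= !ffunE; exact: (hz i).1.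
have flat_sub : forall x : {ffun 'I_n -> M}, (forall i, rel_flat C (x i)) ->
    forall (D : 'M[R]_n) i, rel_flat C (act D x i).
  move=> x hx D i; apply: act_sub => //; [exact: flat0 | by move=> a y y'; exact: flat_lin].
have sharp_sub : forall x : {ffun 'I_n -> M}, (forall i, rel_sharp C (x i)) ->
    forall (D : 'M[R]_n) i, rel_sharp C (act D x i).
  move=> x hx D i; apply: act_sub => //; [exact: sharp0 | by move=> a y y'; exact: sharp_lin].
have hAB : forall i j, J ((A *m B) i j - (i == j)%:R).
  have h1 := linB HCn huw (act_rel A HC hzu).
  have e : wv - act A uv = fv by rewrite hwv addrK.
  rewrite e in h1.
  have hfl : forall i, rel_flat C ((uv - act A zv) i).
    move=> i; apply: (flat_back HC (h1 i)); first by rewrite /= ffunE; exact: (haf i).1.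
    rewrite ffB ffunE; apply: (sharpB HC) => //.
    by apply: sharp_sub => k; rewrite ffunE; exact: (hz k).2.
  have e2 : act (1%:M - A *m B) uv = (uv - act A zv) + act A gv.
    by rewrite actMB act1 act_mul hzv actD opprD addrA addrAC subrK.
  move=> i j.
  have hfl3 : rel_flat C (act (1%:M - A *m B) uv i).
    rewrite e2 ffD; apply: (flatD HC (hfl i)); apply: flat_sub => k.
    by rewrite ffunE; exact: (hbg k).1.
  have e3 : act (1%:M - A *m B) uv i = \sum_k (1%:M - A *m B) i k *: u k.
    by rewrite ffunE; apply: eq_bigr => k _; rewrite ffunE.
  rewrite e3 in hfl3; have := indep _ hfl3 j.
  rewrite [(1%:M - _) i j]mxE [1%:M i j]mxE [(- (A *m B)) i j]mxE.
  by move=> /(JN HJ); rewrite opprD opprK addrC.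
have [Ai [hAAi hAiA]] := mx_inv_nearI HJ hAB.
exists A, Ai.
have [pq hpq] : exists pq : 'I_n -> M * M, forall i,
    (af i).2 = (pq i).1 + (pq i).2 /\ Pset C (pq i).1 /\ Qset C (pq i).2.
  have h : forall i, exists p : M * M, (af i).2 = p.1 + p.2 /\ Pset C p.1 /\ Qset C p.2.
    by move=> i; have [a [b [e [ha hb]]]] := (haf i).1; exists (a, b).
  exact: choice_fun h.
pose pv := [ffun i => (pq i).1]; pose qv := [ffun i => (pq i).2].
have hfv : fv = pv + qv by apply/ffunP => i; rewrite !ffunE (hpq i).1.
have [sp hsp'] := choice_fun (fun i => d_seqE (hpq i).2.1.2).
pose NP := \max_i (sp i).2.
pose Ss := fun m => [ffun i => (sp i).1 m] : {ffun 'I_n -> M}.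
have [pt [hpt Wpt]] : exists pt, reln C (pt, act A pt + Ss 0%N) /\ forall i, Pset C (pt i).
  apply: (@tele _ _ (reln C) HCn (act A) (fun x : {ffun 'I_n -> M} => forall i, Pset C (x i)) _ _ _ _ _ NP Ss).
  - exact: actD.
  - by move=> x y h; exact: act_rel.
  - by move=> i; rewrite ffunE; exact: P0.
  - by move=> x y hx hy i; rewrite ffD; have := P_lin HC 1 (hx i) (hy i); rewrite scale1r.
  - by move=> x hx; apply: act_sub => //; [exact: P0 | move=> a y y'; exact: P_lin].
  - by move=> m i; rewrite /= !ffunE; exact: (hsp' i).2.1 m.
  - move=> m hm; apply/ffunP => i; rewrite !ffunE; apply: (hsp' i).2.2.
    by apply: leq_trans hm; exact: leq_bigmax.
  - move=> m i; rewrite ffunE; split; last exact: d_tail (hsp' i).2.1 (hsp' i).2.2 m.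
    elim: m => [|m IH]; first by rewrite (hsp' i).1; exact: (hpq i).2.1.1.
    exact: (dd_cons (D := C) (x := (sp i).1 m.+1) (y := (sp i).1 m) ((hsp' i).2.1 m) IH).
have hS0 : Ss 0%N = pv by apply/ffunP => i; rewrite !ffunE (hsp' i).1.
rewrite hS0 in hpt.
have [sq hsq] := choice_fun (fun i => d_seqE (hpq i).2.2.2).
pose NQ := \max_i (sq i).2.
pose Ts := fun m => [ffun i => (sq i).1 m] : {ffun 'I_n -> M}.
have HCni := linrel_inv HCn.
have [Y [hY WY]] : exists Y, rel_inv (reln C) (Y, act Ai Y + act Ai (Ts 0%N)) /\ forall i, Qset C (Y i).
  apply: (@tele _ _ (rel_inv (reln C)) HCni (act Ai) (fun x : {ffun 'I_n -> M} => forall i, Qset C (x i)) _ _ _ _ _ NQ (fun m => act Ai (Ts m))).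
  - exact: actD.
  - by move=> x y h; exact: act_rel.
  - by move=> i; rewrite ffunE; exact: Q0.
  - by move=> x y hx hy i; rewrite ffD; have := Q_lin HC 1 (hx i) (hy i); rewrite scale1r.
  - by move=> x hx; apply: act_sub => //; [exact: Q0 | move=> a y y'; exact: Q_lin].
  - move=> m; apply: act_rel => // i; rewrite /= !ffunE; exact: (hsq i).2.1 m.
  - move=> m hm; have -> : Ts m = 0.
      apply/ffunP => i; rewrite !ffunE; apply: (hsq i).2.2.
      by apply: leq_trans hm; exact: leq_bigmax.
    exact: act0.
  - move=> m; apply: act_sub => //; [exact: Q0 | move=> a y y'; exact: Q_lin | ].
    move=> i; rewrite ffunE; split; last exact: d_tail (hsq i).2.1 (hsq i).2.2 m.
    elim: m => [|m IH]; first by rewrite (hsq i).1; exact: (hpq i).2.2.1.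
    exact: (dd_cons (D := rel_inv C) (x := (sq i).1 m.+1) (y := (sq i).1 m) ((hsq i).2.1 m) IH).
have hT0 : Ts 0%N = qv by apply/ffunP => i; rewrite !ffunE (hsq i).1.
rewrite hT0 in hY.
pose X := act Ai Y + act Ai qv.
have hAX : act A X = Y + qv by rewrite actD -!act_mul hAAi !act1.
exists (uv - pt + X); split => //; split => //; split.
  have := linD HCn (linB HCn huw hpt) hY.
  suff -> : wv - (act A pt + pv) + Y = act A (uv - pt + X) by [].
  rewrite actD actB hwv hfv.
  have -> : Y = act A X - qv by rewrite hAX addrK.
  exact: rearr2.
move=> i; rewrite ffD ffB ffunE addrAC (addrAC (u i)) subrr add0r.
apply: (flatD HC); first by apply: (flatN HC); apply: (P_flat HC).
apply: (Q_flat HC); rewrite /X ffD -[act Ai Y i]scale1r; apply: (Q_lin HC).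
  by apply: act_sub => //; [exact: Q0 | move=> a y y'; exact: Q_lin].
apply: act_sub => //; [exact: Q0 | move=> a y y'; exact: Q_lin | ].
by move=> k; rewrite ffunE; exact: (hpq k).2.2.
Qed.
End Key.
Lemma rVlin (R : comNzRingType) n (a : R) (x y : 'rV[R]_n) i : (a *: x + y) 0 i = a * x 0 i + y 0 i.
Proof. by rewrite !mxE. Qed.

Lemma rowK (R : comNzRingType) n (c : 'I_n -> R) i : (\row_j c j : 'rV[R]_n) 0 i = c i.
Proof. by rewrite !mxE. Qed.
Lemma mulrowE (R : comNzRingType) n (x : 'rV[R]_n) (A : 'M[R]_n) i : (x *m A) 0 i = \sum_k x 0 k * A k i.
Proof. by rewrite !mxE. Qed.

Theorem theorem4p13 (R : comNzRingType) (J : R -> Prop) (M : lmodType R)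
    (C : M * M -> Prop) :
  local_ring_with_max J ->
  linrel C ->
  (forall x, ideal_times_mod J x ->
     exists a b, x = (a + b)%R /\ rel_d (rel_inv C) a /\ rel_d C b) ->
  sharp_flat_findim C ->
  exists (X : lmodType R) (T : X -> X) (rho : X -> M),
    is_reduction C T rho /\ free_mod X /\ meets_in_radical C rho.
Proof.
move=> HJ HC H3 [v0 [hv0 hspan0]].
have hgood : exists k, exists u : 'I_k -> M, spans C u.
  exists (size v0), (fun i => nth 0 v0 i); split; first by move=> i; apply: hv0; exact: mem_nth.
  move=> m hm; have [c [f [hf e]]] := hspan0 m hm; exists (fun i => c (nth 0 v0 i)), f; split => //.
  by rewrite e (big_nth 0) big_mkord.
have [n [[u hu] hmin]] := min_ex hgood.
have hmin' : forall k (u' : 'I_k -> M), (k < n)%N -> ~ spans C u'.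
  by move=> k u' hk h; apply: (hmin k hk); exists u'.
have [A [Ai [u' [hAAi [hAiA [hrel hdiff]]]]]] := key HJ HC H3 hu hmin'.
have [hus hspan] := hu.
have indep := indep_min HJ HC H3 hu hmin'.
pose rho := fun x : 'rV[R]_n => \sum_i x 0 i *: u' i.
have hsumdiff : forall c : 'I_n -> R, rel_flat C (\sum_i c i *: u' i - \sum_i c i *: u i).
  move=> c; rewrite -sumrB; apply: (flat_sum HC) => i; rewrite -scalerBr; apply: (flatZ HC).
  exact: hdiff.
have hflat_iff : forall c : 'I_n -> R, rel_flat C (\sum_i c i *: u' i) <-> forall i, J (c i).
  move=> c; split => h.
    apply: indep; rewrite -[\sum_i c i *: u i](subKr (\sum_i c i *: u' i)).
    by apply: (flatB HC) => //; exact: hsumdiff.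
  rewrite -[\sum_i c i *: u' i](subrK (\sum_i c i *: u i)).
  apply: (flatD HC) => //; apply: (flat_sum HC) => i; apply: (JS HC H3) => //.
have hus' : forall i, rel_sharp C (u' i).
  move=> i; rewrite -[u' i](subrK (u i)); apply: (sharpD HC) => //.
  by apply: (flat_sharp HC); exact: hdiff.
have rho_lin : forall a (x y : 'rV[R]_n), rho (a *: x + y) = a *: rho x + rho y.
  move=> a x y; rewrite /rho scaler_sumr -big_split; apply: eq_bigr => i _.
  by rewrite !mxE scalerDl scalerA.
have rho_row : forall c : 'I_n -> R, rho (\row_i c i) = \sum_i c i *: u' i.
  by move=> c; rewrite /rho; apply: eq_bigr => i _; rewrite mxE.
have rhoT : forall x : 'rV[R]_n, rho (x *m A) = \sum_k x 0 k *: act A u' k.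
  move=> x; rewrite /rho; under eq_bigr do rewrite mxE scaler_suml.
  rewrite exchange_big; apply: eq_bigr => k _ /=.
  by rewrite ffunE scaler_sumr; apply: eq_bigr => i _; rewrite scalerA.
exists 'rV[R]_n, (fun x => x *m A), rho.
split; last split.
- split; first by move=> a x y; rewrite mulmxDl scalemxAl.
  split; first by exists (fun x => x *m Ai) => x; rewrite -mulmxA ?hAAi ?hAiA mulmx1.
  split; first exact: rho_lin.
  split.
    move=> m; split.
      move=> hm; have [c [f [hf e]]] := hspan m hm.
      exists (f - (\sum_i c i *: u' i - \sum_i c i *: u i)), (\row_i c i); split.
        by apply: (flatB HC) => //; exact: hsumdiff.
      by rewrite rho_row e opprB -addrA subrK.
    move=> [f [x [hf ->]]]; apply: (sharpD HC); first exact: (flat_sharp HC).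
    by apply: (sharp_sum HC) => i; apply: (sharpZ HC).
  move=> x; rewrite rhoT.
  by apply: lin_sum => // k; exact: hrel k.
- exact: free_rV.
- move=> x; split => h.
    by apply/(rad_rV HJ); exact/hflat_iff.
  by apply/hflat_iff; exact/(rad_rV HJ).
Qed.
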